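(* Let $P=(|P|,\preccurlyeq)$ be a finite poset with a bicoloring, and fix a reference total ordering of $|P|$. Then the sign-imbalance of $P$ (number of even linearizations minus number of odd linearizations) equals the number of even linearizations compatible with the bicoloring minus the number of odd linearizations compatible with the bicoloring. In particular, if $P$ has no linearization compatible with the given bicoloring, then $P$ is sign-balanced (its sign-imbalance is $0$).
   Context: A linearization of a finite poset $P$ with $n$ elements is a total order on $|P|$ refining $\preccurlyeq$. Given a fixed reference ordering $q_1,\dots,q_n$ of $|P|$, a linearization listing the elements as $q_{\sigma(1)}<\dots<q_{\sigma(n)}$ is called even or odd according to whether the permutation $\sigma$ is even or odd. A bicoloring of $P$ is a partition of $|P|$ into two color classes such that whenever one element covers another (i.e. $x\preccurlyeq y$, $x\neq y$, no element strictly between), they have opposite colors. A linearization is compatible with the bicoloring if any two elements that are consecutive in the linearization have opposite colors. *)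

(* Defs.v *)
From HB Require Import structures.
From mathcomp Require Import all_boot all_order all_algebra all_fingroup.
Set Implicit Arguments. Unset Strict Implicit. Unset Printing Implicit Defensive.

(* A finite poset with n elements: carrier 'I_n, order relation le.
   The reference ordering q_1,...,q_n is the natural order of 'I_n. *)
Definition is_partial_order n (le : rel 'I_n) : Prop :=
  [/\ reflexive le, antisymmetric le & transitive le].

Definition covers n (le : rel 'I_n) (x y : 'I_n) : bool :=
  [&& le x y, x != y & ~~ [exists z, [&& le x z, le z y, z != x & z != y]]].

Definition is_bicoloring n (le : rel 'I_n) (color : 'I_n -> bool) : Prop :=
  forall x y, covers le x y -> color x != color y.

(* s lists the elements as s 0 < s 1 < ... < s (n-1) (positions -> elements);
   it is a linearization iff it refines le *)
Definition is_linearization n (le : rel 'I_n) (s : 'S_n) : bool :=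
  [forall i, forall j, le (s i) (s j) ==> (i <= j)].

Definition compatible n (color : 'I_n -> bool) (s : 'S_n) : bool :=
  [forall i : 'I_n, forall j : 'I_n, (val j == (val i).+1) ==> (color (s i) != color (s j))].

Definition n_even_lin n (le : rel 'I_n) : nat :=
  #|[set s : 'S_n | is_linearization le s & ~~ odd_perm s]|.
Definition n_odd_lin n (le : rel 'I_n) : nat :=
  #|[set s : 'S_n | is_linearization le s & odd_perm s]|.

Definition sign_imbalance n (le : rel 'I_n) : int :=
  (n_even_lin le)%:Z - (n_odd_lin le)%:Z.

Definition n_even_comp n (le : rel 'I_n) (color : 'I_n -> bool) : nat :=
  #|[set s : 'S_n | [&& is_linearization le s, compatible color s & ~~ odd_perm s]]|.
Definition n_odd_comp n (le : rel 'I_n) (color : 'I_n -> bool) : nat :=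
  #|[set s : 'S_n | [&& is_linearization le s, compatible color s & odd_perm s]]|.

(* Main.v *)
Require Import Defs.
From HB Require Import structures.
From mathcomp Require Import all_boot all_order all_algebra all_fingroup.
From mathcomp Require Import zify.

Set Implicit Arguments. Unset Strict Implicit.
Section Aux.
Variable n : nat.
Variable color : 'I_n -> bool.

Definition badpair (s : 'S_n) (p : 'I_n * 'I_n) : bool :=
  (val p.2 == (val p.1).+1) && (color (s p.1) == color (s p.2)).
Definition minbad s p := badpair s p && [forall q, badpair s q ==> (val p.1 <= val q.1)].
Definition flip (s : 'S_n) : 'S_n :=
  if [pick p | minbad s p] is Some p then (tperm p.1 p.2 * s)%g else s.

Lemma compatibleN s : ~~ compatible color s = [exists p, badpair s p].
Proof.
apply/idP/existsP => [/forallPn [i /forallPn [j]] | [[i j] /andP[e c]]].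
  by rewrite negb_imply negbK => /andP[e c]; exists (i, j); rewrite /badpair /= e c.
apply/negP => /forallP /(_ i) /forallP /(_ j).
by rewrite e /= (eqP c) eqxx.
Qed.

Lemma minbad_ex s : ~~ compatible color s -> exists p, minbad s p.
Proof.
rewrite compatibleN => /existsP [p0 H0].
case: (arg_minnP (fun p : 'I_n * 'I_n => val p.1) H0) => p Hp Hmin.
exists p; rewrite /minbad Hp /=; apply/forallP => q; apply/implyP; exact: Hmin.
Qed.

Lemma flip_spec (le : rel 'I_n) s :
  is_bicoloring le color -> is_linearization le s -> ~~ compatible color s ->
  [/\ is_linearization le (flip s), ~~ compatible color (flip s),
      odd_perm (flip s) = ~~ odd_perm s & flip (flip s) = s].
Proof.
move=> Hbic Hlin Hnc.
have [p0 Hp0] := @minbad_ex s Hnc.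
rewrite /flip; case: pickP => [[i j] Hp | H]; last by rewrite H in Hp0.
move: Hp => /andP [/andP [/= ej cij] Hmin].
have Hl := fun a b => implyP (forallP (forallP Hlin a) b).
have nij : i != j by apply/negP => /eqP e; move: ej; rewrite e => /eqP; lia.
have nleji : ~~ le (s j) (s i) by apply/negP => /Hl; move: ej => /eqP; lia.
have nleij : ~~ le (s i) (s j).
  apply/negP => hle; suff : covers le (s i) (s j) by move/Hbic; rewrite cij.
  apply/and3P; split => //; first by rewrite (inj_eq perm_inj).
  apply/existsP => [[z /and4P [h1 h2 h3 h4]]].
  rewrite -(permKV s z) in h1 h2 h3 h4.
  move: (Hl _ _ h1) (Hl _ _ h2) h3 h4; rewrite !(inj_eq perm_inj) -!val_eqE /=.
  move: ej => /eqP; rewrite /=; lia.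
set s' := (tperm i j * s)%g.
have Hs' k : s' k = s (tperm i j k) by rewrite permM.
have lin' : is_linearization le s'.
  apply/forallP => a; apply/forallP => b; apply/implyP; rewrite !Hs' => hle.
  have := Hl _ _ hle.
  have vne : forall x y : 'I_n, x <> y -> nat_of_ord x <> nat_of_ord y by move=> x y ne /val_inj.
  move: ej => /eqP ej.
  case: tpermP => [ea|ea|na1 na2]; case: tpermP => [eb|eb|nb1 nb2];
    subst => //; rewrite ?tpermL ?tpermR in hle; try (by rewrite hle in nleij); try (by rewrite hle in nleji);
    repeat match goal with H : _ <> _ |- _ => move/vne: H => H end; lia.
have bad' : badpair s' (i, j) by rewrite /badpair /= !Hs' tpermL tpermR ej (eqP cij) eqxx.
have min' : forall q, badpair s' q -> val i <= val q.1.
  move=> [a b] /andP [/= /eqP eab cab].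
  rewrite leqNgt; apply/negP => ai.
  move: cab; rewrite !Hs' tpermD; last first.
  - by rewrite -val_eqE /=; move: ej => /eqP; lia.
  - by rewrite -val_eqE /=; move: ej => /eqP; lia.
  case: tpermP => [eb|eb|nb1 nb2].
  - subst b => cab.
    have := implyP (forallP Hmin (a, i)); rewrite /badpair /= eab (eqP cab) (eqP cij) !eqxx.
    by move=> /(_ isT); rewrite ltnn.
  - by subst; move: eab ai ej => /= -> /[swap] /eqP ->; rewrite ltnn.
  - move=> cab.
    have := implyP (forallP Hmin (a, b)); rewrite /badpair /= eab cab !eqxx.
    by move=> /(_ isT); rewrite leqNgt ai.
split => //.
- by rewrite compatibleN; apply/existsP; exists (i, j).
- by rewrite odd_permM odd_tperm nij.
case: pickP => [[i' j'] Hp' | H]; last first.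
  have := H (i, j); rewrite /minbad bad' /=.
  by have -> : [forall q, badpair s' q ==> (val i <= val q.1)] by
    apply/forallP => q; apply/implyP; exact: min'.
move: Hp' => /andP [bp' /forallP Hm'].
have e1 : i' = i.
  apply/val_inj/eqP; rewrite eqn_leq; apply/andP; split;
    [exact: (implyP (Hm' (i, j)) bad') | exact: (min' _ bp')].
move: bp' => /andP [/= ej' _].
have e2 : j' = j by apply/val_inj; rewrite /= (eqP ej') (eqP ej) e1.
by rewrite e1 e2 /s' mulgA tperm2 mul1g.
Qed.

End Aux.

Import GRing.Theory.
Local Open Scope ring_scope.

Theorem theorem2p2 (n : nat) (le : rel 'I_n) (color : 'I_n -> bool) :
  is_partial_order le -> is_bicoloring le color ->
  sign_imbalance le = (n_even_comp le color)%:Z - (n_odd_comp le color)%:Z /\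
  ((forall s : 'S_n, is_linearization le s -> ~~ compatible color s) ->
   sign_imbalance le = 0).
Proof.
move=> _ Hbic.
set N := [set s : 'S_n | is_linearization le s & ~~ compatible color s].
have key : #|[set s in N | ~~ odd_perm s]| = #|[set s in N | odd_perm s]|.
  rewrite -(card_in_imset (f := flip color)).
    apply: eq_card => t; rewrite [t \in [set _ in N | _]]inE [t \in N]inE; apply/imsetP/idP.
      move=> [s]; rewrite !inE => /andP [/andP [l c] o] ->.
      by have [l' c' o' _] := flip_spec Hbic l c; rewrite l' c' o'.
    move=> /andP [/andP [l c] o].
    have [l' c' o' ff] := flip_spec Hbic l c.
    by exists (flip color t) => //; rewrite !inE l' c' o' o.
  move=> x y; rewrite !inE => /andP [/andP [lx cx] _] /andP [/andP [ly cy] _] e.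
  have [_ _ _ fx] := flip_spec Hbic lx cx.
  have [_ _ _ fy] := flip_spec Hbic ly cy.
  by rewrite -fx -fy e.
have split_even : n_even_lin le = (n_even_comp le color + #|[set s in N | ~~ odd_perm s]|)%N.
  rewrite /n_even_lin /n_even_comp -(cardsID [set s | compatible color s]); congr (_ + _)%N;
    apply: eq_card => s; rewrite !inE; by case: (is_linearization le s); case: (compatible color s); case: (odd_perm s).
have split_odd : n_odd_lin le = (n_odd_comp le color + #|[set s in N | odd_perm s]|)%N.
  rewrite /n_odd_lin /n_odd_comp -(cardsID [set s | compatible color s]); congr (_ + _)%N;
    apply: eq_card => s; rewrite !inE; by case: (is_linearization le s); case: (compatible color s); case: (odd_perm s).
have main : sign_imbalance le = (n_even_comp le color)%:Z - (n_odd_comp le color)%:Z.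
  rewrite /sign_imbalance split_even split_odd key !PoszD.
  by rewrite opprD addrACA subrr addr0.
split => // Hno; rewrite main.
have -> : n_even_comp le color = 0%N.
  apply/eqP; rewrite cards_eq0; apply/eqP/setP => s; rewrite !inE.
  by case L: (is_linearization le s) => //=; rewrite (negbTE (Hno _ L)).
have -> : n_odd_comp le color = 0%N.
  apply/eqP; rewrite cards_eq0; apply/eqP/setP => s; rewrite !inE.
  by case L: (is_linearization le s) => //=; rewrite (negbTE (Hno _ L)).
by [].
Qed.
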